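(* Let $n\ge 1$ be an integer and $b_a,b_v,c$ real parameters. For $p,q\in[0,1]$ let $n_G\sim\mathrm{Bin}(n,p)$ and, conditionally on $n_G$, $n_V\sim\mathrm{Bin}(n-n_G,q)$ (equivalently $(n_G,n_V)$ is multinomial with $n$ trials and outcome probabilities $p,(1-p)q,(1-p)(1-q)$). Define $$w_G=\mathbb E\Big[\tfrac{b_a(n_G+1)}{n+1}\Big],\quad w_V=\mathbb E\Big[\tfrac{b_an_G}{n+1}\Big]+\mathbb E\Big[\tfrac{b_v(n_V+1)}{n-n_G+1}\Big]-c,\quad w_D=\mathbb E\Big[\tfrac{b_an_G}{n+1}\Big]+\mathbb E\Big[\tfrac{b_vn_V}{n-n_G+1}\Big],$$ and $\langle w\rangle_{V,D}=qw_V+(1-q)w_D$. Then $$w_G-\langle w\rangle_{V,D}=\frac{b_a}{n+1}-q(b_v-c),\qquad w_V-w_D=\frac{b_v}{n+1}\sum_{k=0}^n p^k-c.$$ Consequently the dynamics $\dot p=p(1-p)(w_G-\langle w\rangle_{V,D})$, $\dot q=q(1-q)(w_V-w_D)$ take the form $$\dot p=p(1-p)\Big(\frac{b_a}{n+1}-q(b_v-c)\Big),\qquad \dot q=q(1-q)\Big(\frac{b_v}{n+1}\sum_{k=0}^n p^k-c\Big).$$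
   Context: This is the ''double goods game'': $p$ is the proportion of glycolytic cells (G), $q$ the proportion of VEGF (over)producers (V) among aerobic cells (V and D). $b_a$ is the benefit per unit of acidification (a public good produced by G cells and shared among all $n+1$ group members), $b_v$ the benefit per unit of vascularization (a club good produced by V cells at cost $c$ and shared only among the $n-n_G+1$ aerobic members of the group), and $n$ the number of interaction partners. *)

(* Defs.v *)
From mathcomp Require Import all_boot all_order all_algebra.
From mathcomp Require Import reals.
Set Implicit Arguments. Unset Strict Implicit. Unset Printing Implicit Defensive.
Import Order.TTheory GRing.Theory Num.Theory.
Local Open Scope ring_scope.

Section DoubleGoods.
Variable R : realType.

Definition binom_pmf (m : nat) (r : R) (k : nat) : R :=
  'C(m, k)%:R * r ^+ k * (1 - r) ^+ (m - k).

Definition Exp2 (n : nat) (p q : R) (f : nat -> nat -> R) : R :=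
  \sum_(i < n.+1) \sum_(j < (n - i).+1)
     binom_pmf n p i * binom_pmf (n - i) q j * f i j.

Definition wG (n : nat) (ba bv c p q : R) : R :=
  Exp2 n p q (fun nG _ => ba * (nG.+1)%:R / (n.+1)%:R).

Definition wV (n : nat) (ba bv c p q : R) : R :=
  Exp2 n p q (fun nG _ => ba * nG%:R / (n.+1)%:R)
  + Exp2 n p q (fun nG nV => bv * (nV.+1)%:R / ((n - nG).+1)%:R) - c.

Definition wD (n : nat) (ba bv c p q : R) : R :=
  Exp2 n p q (fun nG _ => ba * nG%:R / (n.+1)%:R)
  + Exp2 n p q (fun nG nV => bv * nV%:R / ((n - nG).+1)%:R).

Definition wVD (n : nat) (ba bv c p q : R) : R :=
  q * wV n ba bv c p q + (1 - q) * wD n ba bv c p q.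

Definition pdot (n : nat) (ba bv c p q : R) : R :=
  p * (1 - p) * (wG n ba bv c p q - wVD n ba bv c p q).
Definition qdot (n : nat) (ba bv c p q : R) : R :=
  q * (1 - q) * (wV n ba bv c p q - wD n ba bv c p q).

End DoubleGoods.

(* Main.v *)
Require Import Defs.
From mathcomp Require Import all_boot all_order all_algebra.
From mathcomp Require Import reals.
From mathcomp Require Import ring.
Import Order.TTheory GRing.Theory Num.Theory.
Local Open Scope ring_scope.

Section Aux.
Variable R : realType.

Lemma pmf_sum1 m (r : R) : \sum_(j < m.+1) binom_pmf m r j = 1.
Proof.
have := exprDn (1 - r) r m; rewrite subrK expr1n => ->.
apply: eq_bigr => i _; rewrite /binom_pmf -mulr_natl; ring.
Qed.

Lemma pmf_mean m (r : R) :
  \sum_(j < m.+1) binom_pmf m r j * (nat_of_ord j)%:R = m%:R * r.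
Proof.
case: m => [|m]; first by rewrite big_ord1 /= mulr0 mul0r.
rewrite big_ord_recl /= mulr0 add0r.
rewrite (eq_bigr (fun i : 'I_m.+1 => m.+1%:R * r * binom_pmf m r i)).
  by rewrite -big_distrr /= pmf_sum1 mulr1.
move=> i _; rewrite /bump /= add1n /binom_pmf subSS.
have h := mul_bin_diag m.+1 i.
have hR : (i.+1)%:R * 'C(m.+1, i.+1)%:R = m.+1%:R * 'C(m, i)%:R :> R.
  by rewrite -!natrM -h.
set a := 'C(m.+1, i.+1)%:R.
rewrite [LHS](_ : _ = ((i.+1)%:R * a) * r * r ^+ i * (1 - r) ^+ (m - i)).
  rewrite hR; ring.
rewrite exprS; ring.
Qed.

Lemma Exp2B n (p q : R) f g :
  Exp2 n p q f - Exp2 n p q g = Exp2 n p q (fun i j => f i j - g i j).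
Proof.
rewrite /Exp2 -sumrB; apply: eq_bigr => i _; rewrite -sumrB.
by apply: eq_bigr => j _; ring.
Qed.

Lemma Exp2_ext n (p q : R) f g : (forall i j, (i <= n)%N -> f i j = g i j) ->
  Exp2 n p q f = Exp2 n p q g.
Proof.
move=> H; apply: eq_bigr => i _; apply: eq_bigr => j _.
by rewrite H // -ltnS.
Qed.

Lemma Exp2_fst n (p q : R) (g : nat -> R) :
  Exp2 n p q (fun i _ => g i) = \sum_(i < n.+1) binom_pmf n p i * g i.
Proof.
apply: eq_bigr => i _.
rewrite (eq_bigr (fun j : 'I_(n - i).+1 =>
   binom_pmf n p i * g i * binom_pmf (n - i) q j)); last by move=> j _; ring.
by rewrite -big_distrr /= pmf_sum1 mulr1.
Qed.

Lemma Exp2_lin n (p q : R) (h k : nat -> R) :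
  Exp2 n p q (fun i j => h i * j%:R + k i)
  = \sum_(i < n.+1) binom_pmf n p i * (h i * (n - i)%:R * q + k i).
Proof.
apply: eq_bigr => i _.
rewrite (eq_bigr (fun j : 'I_(n - i).+1 =>
   binom_pmf n p i * h i * (binom_pmf (n - i) q j * (nat_of_ord j)%:R)
   + binom_pmf n p i * k i * binom_pmf (n - i) q j)); last by move=> j _; ring.
rewrite big_split /= -!big_distrr /= pmf_sum1 pmf_mean; ring.
Qed.

Lemma geomT n (p : R) :
  \sum_(i < n.+1) 'C(n.+1, i)%:R * p ^+ i * (1 - p) ^+ (n - i)
  = \sum_(k < n.+1) p ^+ k.
Proof.
have HT : (1 - p) * \sum_(i < n.+1) 'C(n.+1, i)%:R * p ^+ i * (1 - p) ^+ (n - i)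
          + p ^+ n.+1 = 1.
  have E := exprDn (1 - p) p n.+1; rewrite subrK expr1n in E; rewrite [RHS]E.
  rewrite [RHS]big_ord_recr /= subnn expr0 mul1r binn mulr1n; congr (_ + _).
  rewrite big_distrr /=; apply: eq_bigr => i _.
  rewrite subSn ?(leq_ord i) // exprS -mulr_natl; ring.
have HQ : (1 - p) * \sum_(k < n.+1) p ^+ k + p ^+ n.+1 = 1.
  have := subrX1 p n.+1 => h.
  have -> : (1 - p) * \sum_(k < n.+1) p ^+ k = - ((p - 1) * \sum_(k < n.+1) p ^+ k)
    by ring.
  rewrite -h; ring.
have [->|p1] := eqVneq p 1.
  rewrite subrr.
  under eq_bigr do rewrite expr1n mulr1.
  under [RHS]eq_bigr do rewrite expr1n.
  rewrite sumr_const card_ord big_ord_recr /= subnn expr0 binSn mulr1.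
  rewrite big1 ?add0r //.
  move=> i _; rewrite expr0n.
  have : (n - i != 0)%N by rewrite subn_eq0 -ltnNge.
  by move/negPf => ->; rewrite mulr0.
apply: (mulfI (x := 1 - p)); first by rewrite subr_eq0 eq_sym.
by apply: (addIr (p ^+ n.+1)); rewrite HT HQ.
Qed.

Lemma geom n (p : R) :
  \sum_(i < n.+1) binom_pmf n p i / ((n - i).+1)%:R
  = (n.+1)%:R^-1 * \sum_(k < n.+1) p ^+ k.
Proof.
rewrite -geomT big_distrr /=; apply: eq_bigr => i _.
have h := mul_bin_down n.+1 i.
rewrite /= subSn ?(leq_ord i) // in h.
have hR : (n.+1)%:R * 'C(n, i)%:R = ((n - i).+1)%:R * 'C(n.+1, i)%:R :> R.
  by rewrite -!natrM h.
rewrite /binom_pmf.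
have n0 : (n.+1)%:R != 0 :> R by rewrite pnatr_eq0.
have m0 : ((n - i).+1)%:R != 0 :> R by rewrite pnatr_eq0.
apply: (mulfI n0); apply: (mulfI m0).
rewrite [LHS](_ : _ = ((n.+1)%:R * 'C(n, i)%:R) * p ^+ i * (1 - p) ^+ (n - i)
   * (((n - i).+1)%:R / ((n - i).+1)%:R)); last by ring.
rewrite [RHS](_ : _ = (((n - i).+1)%:R * 'C(n.+1, i)%:R) * p ^+ i * (1 - p) ^+ (n - i)
   * ((n.+1)%:R / (n.+1)%:R)); last by ring.
by rewrite hR !divff // !mulr1.
Qed.

End Aux.

Theorem mainTheorem3 (R : realType) (n : nat) (ba bv c p q : R) :
  (1 <= n)%N -> 0 <= p <= 1 -> 0 <= q <= 1 ->
  [/\ wG n ba bv c p q - wVD n ba bv c p q = ba / (n.+1)%:R - q * (bv - c),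
      wV n ba bv c p q - wD n ba bv c p q
        = bv / (n.+1)%:R * (\sum_(k < n.+1) p ^+ k) - c,
      pdot n ba bv c p q = p * (1 - p) * (ba / (n.+1)%:R - q * (bv - c))
    & qdot n ba bv c p q
        = q * (1 - q) * (bv / (n.+1)%:R * (\sum_(k < n.+1) p ^+ k) - c)].
Proof.
move=> _ _ _.
set Eb := \sum_(i < n.+1) binom_pmf n p i * (bv / ((n - i).+1)%:R).
have EbE : Eb = bv / (n.+1)%:R * (\sum_(k < n.+1) p ^+ k).
  rewrite /Eb (eq_bigr (fun i : 'I_n.+1 => bv * (binom_pmf n p i / ((n - i).+1)%:R)));
    last by move=> i _; ring.
  rewrite -big_distrr /= geom; ring.
have key2' : wV n ba bv c p q - wD n ba bv c p q = Eb - c.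
  rewrite /wV /wD.
  have e : forall A B1 B0 c : R, A + B1 - c - (A + B0) = (B1 - B0) - c
    by move=> *; ring.
  rewrite e Exp2B (@Exp2_ext _ _ _ _ _ (fun i _ => bv / ((n - i).+1)%:R)).
    by rewrite Exp2_fst.
  move=> i j _; rewrite -!natr1; ring.
have key2 : wV n ba bv c p q - wD n ba bv c p q
        = bv / (n.+1)%:R * (\sum_(k < n.+1) p ^+ k) - c by rewrite key2' EbE.
have key1 : wG n ba bv c p q - wVD n ba bv c p q = ba / (n.+1)%:R - q * (bv - c).
  rewrite /wVD.
  have e : forall G V D : R, G - (q * V + (1 - q) * D) = (G - D) - q * (V - D)
    by move=> *; ring.
  rewrite e key2' /wD /wG.
  set A := Exp2 _ _ _ (fun nG _ => ba * nG%:R / _).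
  set B0 := Exp2 _ _ _ (fun nG nV => bv * nV%:R / _).
  have e2 : forall G A B0 : R, G - (A + B0) = (G - A) - B0 by move=> *; ring.
  rewrite e2 /A Exp2B (@Exp2_ext _ _ _ _ _ (fun i _ => ba / (n.+1)%:R)); last first.
    by move=> i j _; rewrite -!natr1; ring.
  rewrite Exp2_fst -big_distrl /= pmf_sum1 mul1r.
  have HB : B0 + q * Eb = q * bv.
    rewrite /B0 (@Exp2_ext _ _ _ _ _
       (fun i j => (bv / ((n - i).+1)%:R) * j%:R + 0)); last first.
      by move=> i j _; ring.
    rewrite Exp2_lin /Eb big_distrr -big_split /=.
    rewrite (eq_bigr (fun i : 'I_n.+1 => binom_pmf n p i * (q * bv))).
      by rewrite -big_distrl /= pmf_sum1 mul1r.
    move=> i _.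
    have m0 : ((n - i).+1)%:R != 0 :> R by rewrite pnatr_eq0.
    rewrite -!natr1; field.
    by rewrite natr1.
  have -> : ba / (n.+1)%:R - B0 - q * (Eb - c) = ba / (n.+1)%:R - (B0 + q * Eb) + q * c
    by ring.
  rewrite HB; ring.
split => //.
  by rewrite /pdot key1.
by rewrite /qdot key2.
Qed.
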